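(* Let $M$ be an $m\times n$ ACI-matrix over a field $\mathbb{F}$, let $F\subseteq\{1,\dots,n\}$ be a factor set (resp. semifactor set) of $M$, and let $P$ be a permutation matrix of order $m$ such that $$PMQ_F=\begin{bmatrix} A & B\\ 0 & C\end{bmatrix},$$ where $A$ has $\#F$ columns and $A$ has linearly independent rows. Then this block decomposition is an $F$-decomposition (resp. $F$-semidecomposition); that is, the zero block is Big (resp. Medium), $A$ is FRmR and $C$ is FCmR.
   Context: Let $\mathbb{F}$ be a field. An ACI-matrix is a matrix with entries in $\mathbb{F}[x_1,\dots,x_k]$ whose entries are polynomials of degree at most one and such that no indeterminate appears in two different columns. A completion is an assignment of values in $\mathbb{F}$ to all indeterminates; $\mathrm{maxRank}(N)$ is the maximum rank of a completion. ACI-matrices (and blocks) of size $0\times q$ ($q>0$, wide degenerate), $p\times 0$ ($p>0$, tall degenerate) and $0\times0$ (void) are allowed. $N$ is FRmR if $\mathrm{maxRank}(N)=\mathrm{rows}(N)$, FCmR if $\mathrm{maxRank}(N)=\mathrm{cols}(N)$; by convention tall degenerate is FRmR, wide degenerate is FCmR, void is both. For an $m\times n$ block matrix $\begin{bmatrix} A & B\\ 0 & C\end{bmatrix}$ with lower-left $r\times s$ zero block, the zero block is Big if $r+s>\max\{m,n\}$, Medium if $r+s=\max\{m,n\}$. For $F=\{f_1<\dots<f_s\}\subseteq\{1,\dots,n\}$ with complement $\{g_1<\dots<g_{n-s}\}$, $Q_F$ is the $n\times n$ permutation matrix such that $MQ_F$ has as columns $f_1,\dots,f_s,g_1,\dots,g_{n-s}$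 of $M$ in that order. $F$ is a factor set of $M$ if there is a nonsingular constant $m\times m$ matrix $R$ with $RMQ_F=\begin{bmatrix} A & B\\ 0 & C\end{bmatrix}$, $A$ having $\#F$ columns, the zero block Big, $A$ FRmR and $C$ FCmR; such an $RMQ_F$ is an $F$-decomposition. $F$ is a semifactor set (and $RMQ_F$ an $F$-semidecomposition) if the same holds with the zero block Medium. Linear independence of rows is over $\mathbb{F}$: if a column involves indeterminates $y_1,\dots,y_t$, its entries lie in the $\mathbb{F}$-vector space $\mathbb{F}+\mathbb{F}y_1+\dots+\mathbb{F}y_t$, and rows are vectors in the product of these spaces. *)

(* Defs.v *)
From mathcomp Require Import all_boot all_order all_algebra.
Set Implicit Arguments. Unset Strict Implicit. Unset Printing Implicit Defensive.
Import GRing.Theory.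
Local Open Scope ring_scope.

(* An "affine" matrix over F[x_0..x_{k-1}] whose entries have degree <= 1:
   entry (i,j) is  amc i j + \sum_t (amv t) i j * x_t . *)
Record amx (F : fieldType) (k m n : nat) := AMx {
  amc : 'M[F]_(m, n);
  amv : 'I_k -> 'M[F]_(m, n) }.

Section Defs.
Variables (F : fieldType) (k : nat).

Definition is_ACI m n (N : amx F k m n) : Prop :=
  forall (t : 'I_k) (i1 i2 : 'I_m) (j1 j2 : 'I_n),
    amv N t i1 j1 != 0 -> amv N t i2 j2 != 0 -> j1 = j2.

Definition amx_lmul m m' n (R : 'M[F]_(m', m)) (N : amx F k m n) : amx F k m' n :=
  AMx (R *m amc N) (fun t => R *m amv N t).
Definition amx_rmul m n n' (N : amx F k m n) (Q : 'M[F]_(n, n')) : amx F k m n' :=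
  AMx (amc N *m Q) (fun t => amv N t *m Q).

Definition amx_sub m n m' n' (f : 'I_m' -> 'I_m) (g : 'I_n' -> 'I_n)
  (N : amx F k m n) : amx F k m' n' :=
  AMx (mxsub f g (amc N)) (fun t => mxsub f g (amv N t)).

Definition completion m n (N : amx F k m n) (v : 'I_k -> F) : 'M[F]_(m, n) :=
  amc N + \sum_(t < k) v t *: amv N t.

Definition maxRank_is m n (N : amx F k m n) (r : nat) : Prop :=
  (exists v, \rank (completion N v) = r) /\ (forall v, (\rank (completion N v) <= r)%N).

(* FRmR / FCmR, with the conventions for degenerate (and void) matrices *)
Definition FRmR m n (N : amx F k m n) : Prop := n = 0%N \/ maxRank_is N m.
Definition FCmR m n (N : amx F k m n) : Prop := m = 0%N \/ maxRank_is N n.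

Definition amx_zero m n (N : amx F k m n) : Prop :=
  amc N = 0 /\ forall t, amv N t = 0.

(* rows linearly independent over F (rows viewed as vectors of constant
   terms and coefficients of the indeterminates) *)
Definition rows_indep m n (N : amx F k m n) : Prop :=
  forall l : 'I_m -> F,
    (forall j, \sum_(i < m) l i * amc N i j = 0) ->
    (forall t j, \sum_(i < m) l i * amv N t i j = 0) ->
    forall i, l i = 0.
End Defs.

(* Q_F : MQ_F has columns f_1 < ... < f_s, g_1 < ... < g_{n-s} of M *)
Definition qF_idx n (S : {set 'I_n}) (j : 'I_n) : 'I_n :=
  nth j (enum S ++ enum (~: S)) j.
Definition Q_F (F : fieldType) n (S : {set 'I_n}) : 'M[F]_n :=
  \matrix_(i, j) (qF_idx S j == i)%:R.

Lemma bot_idx_proof m r (hr : (r <= m)%N) (i : 'I_r) : (m - r + i < m)%N.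
Proof.
have := ltn_ord i; rewrite -(ltn_add2l (m - r)) subnK //.
Qed.
Definition top_idx m r (i : 'I_(m - r)) : 'I_m := widen_ord (leq_subr r m) i.
Definition bot_idx m r (hr : (r <= m)%N) (i : 'I_r) : 'I_m :=
  Ordinal (bot_idx_proof hr i).
Lemma card_set_le n (S : {set 'I_n}) : (#|S| <= n)%N.
Proof. by apply: leq_trans (max_card _) _; rewrite card_ord. Qed.
Definition left_idx n (S : {set 'I_n}) (j : 'I_#|S|) : 'I_n :=
  widen_ord (card_set_le S) j.
Definition right_idx n (S : {set 'I_n}) (j : 'I_(n - #|S|)) : 'I_n :=
  bot_idx (leq_subr #|S| n) j.

(* For N = [A B; 0 C] (m x n) with lower-left zero block of size r x #|S|: *)
Section Blocks.
Variables (F : fieldType) (k m n : nat) (S : {set 'I_n}) (r : nat) (hr : (r <= m)%N).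
Definition blkA (N : amx F k m n) : amx F k (m - r) #|S| :=
  amx_sub (@top_idx m r) (@left_idx n S) N.
Definition blk0 (N : amx F k m n) : amx F k r #|S| :=
  amx_sub (bot_idx hr) (@left_idx n S) N.
Definition blkC (N : amx F k m n) : amx F k r (n - #|S|) :=
  amx_sub (bot_idx hr) (@right_idx n S) N.
End Blocks.

Inductive zkind := Big | Medium.
Definition zsize_ok (z : zkind) (r s m n : nat) : bool :=
  match z with
  | Big => (maxn m n < r + s)%N
  | Medium => (r + s == maxn m n)%N
  end.

(* N (already of the form R M Q_F) is an F-decomposition (z = Big) or an
   F-semidecomposition (z = Medium) with lower-left zero block of r rows *)
Definition is_Fdecomp (F : fieldType) k m n (z : zkind) (S : {set 'I_n})
  (r : nat) (hr : (r <= m)%N) (N : amx F k m n) : Prop :=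
  [/\ amx_zero (blk0 S hr N), zsize_ok z r #|S| m n,
      FRmR (blkA S r N) & FCmR (blkC S hr N)].

Definition is_factor_set (F : fieldType) k m n (z : zkind) (M : amx F k m n)
  (S : {set 'I_n}) : Prop :=
  exists R : 'M[F]_m, R \in unitmx /\
    exists r (hr : (r <= m)%N),
      is_Fdecomp z S hr (amx_lmul R (amx_rmul M (Q_F F S))).

(* Main.v *)
Require Import Defs.
From mathcomp Require Import all_boot all_order all_algebra zify.
Set Implicit Arguments. Unset Strict Implicit. Unset Printing Implicit Defensive.
Import GRing.Theory.
Local Open Scope ring_scope.

Section H.
Variable F : fieldType.

Lemma delta_sum p m (h : 'I_p -> 'I_m) (hinj : injective h) (y : 'I_p -> F) i :
  \sum_a (h a == i)%:R * y a = if [pick a | h a == i] is Some a then y a else 0.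
Proof.
case: pickP => [a0 /eqP ha0 | none].
  rewrite (bigD1 a0) //= ha0 eqxx mul1r big1 ?addr0 // => a na.
  by rewrite -ha0 (inj_eq hinj) (negbTE na) mul0r.
by rewrite big1 // => a _; rewrite none mul0r.
Qed.

Lemma sum_inj_supp p m (h : 'I_p -> 'I_m) (hinj : injective h) (f : 'I_m -> F) :
  (forall i, (forall a, h a != i) -> f i = 0) -> \sum_i f i = \sum_a f (h a).
Proof.
move=> hf.
transitivity (\sum_a \sum_i (h a == i)%:R * f i); last first.
  apply: eq_bigr => a _; rewrite (bigD1 (h a)) //= eqxx mul1r big1 ?addr0 //.
  by move=> i ni; rewrite eq_sym (negbTE ni) mul0r.
rewrite exchange_big; apply: eq_bigr => i _.
rewrite (delta_sum hinj (fun _ => f i)).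
case: pickP => [a0 /eqP ha0 | none]; first by [].
by rewrite hf // => a; rewrite none.
Qed.

Lemma fact_rowsub p m c (h : 'I_p -> 'I_m) (hinj : injective h) (X : 'M[F]_(m, c)) :
  (forall i, (forall a, h a != i) -> forall j, X i j = 0) ->
  X = (\matrix_(i, a) (h a == i)%:R) *m rowsub h X.
Proof.
move=> hX; apply/matrixP => i j; rewrite !mxE.
under eq_bigr do rewrite !mxE.
rewrite (delta_sum hinj (fun a => X (h a) j)).
case: pickP => [a0 /eqP -> | none] //.
by rewrite hX // => a; rewrite none.
Qed.

Lemma rank_rowsub_ge p m c (h : 'I_p -> 'I_m) (hinj : injective h) (X : 'M[F]_(m, c)) :
  (forall i, (forall a, h a != i) -> forall j, X i j = 0) ->
  (\rank X <= \rank (rowsub h X))%N.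
Proof. by move=> hX; rewrite {1}(fact_rowsub hinj hX) mxrankM_maxr. Qed.

Lemma mxsub_mul m p q m' q' (f : 'I_m' -> 'I_m) (g : 'I_q' -> 'I_q)
  (A : 'M[F]_(m, p)) (B : 'M[F]_(p, q)) :
  mxsub f g (A *m B) = rowsub f A *m colsub g B.
Proof. by apply/matrixP => i j; rewrite !mxE; apply: eq_bigr => l _; rewrite !mxE. Qed.

Lemma completion_lmul k m m' n (R : 'M[F]_(m', m)) (N : amx F k m n) v :
  completion (amx_lmul R N) v = R *m completion N v.
Proof.
rewrite /completion /= mulmxDr mulmx_sumr; congr (_ + _).
by apply: eq_bigr => t _; rewrite scalemxAr.
Qed.

Lemma completion_sub k m n m' n' (f : 'I_m' -> 'I_m) (g : 'I_n' -> 'I_n)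
  (N : amx F k m n) v :
  completion (amx_sub f g N) v = mxsub f g (completion N v).
Proof.
apply/matrixP => i j; rewrite /completion /= !mxE !summxE.
by congr (_ + _); apply: eq_bigr => t _; rewrite !mxE.
Qed.

Lemma top_inj m r : injective (@top_idx m r).
Proof. by move=> a b /(congr1 val) /= /val_inj. Qed.
Lemma bot_inj m r (hr : (r <= m)%N) : injective (bot_idx hr).
Proof. by move=> a b /(congr1 val) /= /addnI /val_inj. Qed.

Lemma not_top m r (j : 'I_m) : (forall a, @top_idx m r a != j) -> (m - r <= j)%N.
Proof.
move=> H; rewrite leqNgt; apply/negP => hj.
by move: (H (Ordinal hj)); rewrite eqE /= eqxx.
Qed.
Lemma not_bot m r (hr : (r <= m)%N) (j : 'I_m) :
  (forall a, bot_idx hr a != j) -> (j < m - r)%N.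
Proof.
move=> H; rewrite ltnNge; apply/negP => hj.
have hl : (j - (m - r) < r)%N.
  by rewrite ltn_subLR // subnK ?ltn_ord // leq_subr.
by move: (H (Ordinal hl)); rewrite eqE /= subnKC // eqxx.
Qed.
Lemma top_of m r (j : 'I_m) : (j < m - r)%N -> exists a, @top_idx m r a = j.
Proof. by move=> hj; exists (Ordinal hj); apply: val_inj. Qed.
Lemma bot_of m r (hr : (r <= m)%N) (j : 'I_m) : (m - r <= j)%N -> exists a, bot_idx hr a = j.
Proof.
move=> hj.
have hl : (j - (m - r) < r)%N.
  by rewrite ltn_subLR // subnK ?ltn_ord // leq_subr.
by exists (Ordinal hl); apply: val_inj; rewrite /= subnKC.
Qed.
End H.
Lemma rank_rowsub_le (F : fieldType) m n p (f : 'I_p -> 'I_m) (X : 'M[F]_(m, n)) :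
  (\rank (rowsub f X) <= \rank X)%N.
Proof.
have -> : rowsub f X = rowsub f 1%:M *m X.
  apply/matrixP => i j; rewrite !mxE (bigD1 (f i)) //= !mxE eqxx mul1r big1 ?addr0 //.
  by move=> l nl; rewrite !mxE eq_sym (negbTE nl) mul0r.
exact: mxrankM_maxr.
Qed.
Theorem lemma4p6 (F : fieldType) (k m n : nat) (M : amx F k m n)
  (z : zkind) (S : {set 'I_n}) (P : 'M[F]_m) (r : nat) (hr : (r <= m)%N) :
  is_ACI M ->
  is_factor_set z M S ->
  is_perm_mx P ->
  amx_zero (blk0 S hr (amx_lmul P (amx_rmul M (Q_F F S)))) ->
  rows_indep (blkA S r (amx_lmul P (amx_rmul M (Q_F F S)))) ->
  is_Fdecomp z S hr (amx_lmul P (amx_rmul M (Q_F F S))).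
Proof.
move=> _ [R [Ru [r' [hr' [Z' Sz' FA' FC']]]]] /is_perm_mxP [sg Psg] [Zc Zv] Ind.
set Mq := amx_rmul M (Q_F F S).
set N := amx_lmul P Mq.
set N' := amx_lmul R Mq.
have Pu : P \in unitmx by rewrite Psg unitmx_perm.
set G := R *m invmx P.
have GN : forall X : 'M[F]_(m, n), R *m X = G *m (P *m X).
  by move=> X; rewrite /G mulmxA -(mulmxA R) mulVmx // mulmx1.
have Gu : G \in unitmx by rewrite unitmx_mul Ru unitmx_inv.
clearbody G.
have cN : forall v, completion N' v = G *m completion N v.
  by move=> v; rewrite !completion_lmul GN.
have Z0 : forall (j : 'I_m) (c : 'I_#|S|), (forall a, @top_idx m r a != j) ->
    amc N j (left_idx c) = 0 /\ forall t, amv N t j (left_idx c) = 0.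
  move=> j c hj0; have [a <-] := bot_of hr (not_top hj0); split.
    by move/matrixP: Zc => /(_ a c); rewrite !mxE.
  by move=> t; move/matrixP: (Zv t) => /(_ a c); rewrite !mxE.
have Zcomp : forall v (j : 'I_m) (c : 'I_#|S|), (forall a, @top_idx m r a != j) ->
    completion N v j (left_idx c) = 0.
  move=> v j c hj; have [h1 h2] := Z0 j c hj.
  rewrite /completion mxE summxE h1 add0r big1 // => t _.
  by rewrite [LHS]mxE h2 mulr0.
have Z'c : forall (i0 : 'I_r') (c : 'I_#|S|), amc N' (bot_idx hr' i0) (left_idx c) = 0.
  by move=> i0 c; case: Z' => Zc' _; move/matrixP: Zc' => /(_ i0 c); rewrite !mxE.
have Z'v : forall t (i0 : 'I_r') (c : 'I_#|S|), amv N' t (bot_idx hr' i0) (left_idx c) = 0.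
  by move=> t i0 c; case: Z' => _ /(_ t) Zv'; move/matrixP: Zv' => /(_ i0 c); rewrite !mxE.
have Aent : forall a c, amc (blkA S r N) a c = amc N (top_idx a) (left_idx c).
  by move=> a c; rewrite /= mxE.
have Avent : forall t a c, amv (blkA S r N) t a c = amv N t (top_idx a) (left_idx c).
  by move=> t a c; rewrite /= mxE.
have amcN : amc N' = G *m amc N by rewrite /N' /N /= GN.
have amvN : forall t, amv N' t = G *m amv N t by move=> t; rewrite /N' /N /= GN.
have Gz : forall (i0 : 'I_r') (a : 'I_(m - r)), G (bot_idx hr' i0) (top_idx a) = 0.
  move=> i0 a0; apply: (Ind (fun a => G (bot_idx hr' i0) (top_idx a))).
    move=> c; under eq_bigr do rewrite Aent.
    transitivity (\sum_j G (bot_idx hr' i0) j * amc N j (left_idx c)).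
      symmetry; apply: (sum_inj_supp (@top_inj m r) (f := fun j => G (bot_idx hr' i0) j * amc N j (left_idx c))) => i Hi. 
      by rewrite (Z0 i c Hi).1 mulr0.
    by rewrite -[RHS](Z'c i0 c) amcN [RHS]mxE.
  move=> t c; under eq_bigr do rewrite Avent.
  transitivity (\sum_j G (bot_idx hr' i0) j * amv N t j (left_idx c)).
    symmetry; apply: (sum_inj_supp (@top_inj m r) (f := fun j => G (bot_idx hr' i0) j * amv N t j (left_idx c))) => i Hi.
    by rewrite ((Z0 i c Hi).2 t) mulr0.
  by rewrite -[RHS](Z'v t i0 c) amvN [RHS]mxE.
have rle : (r' <= r)%N.
  pose Etop : 'M[F]_(m, m - r) := \matrix_(i, a) (@top_idx m r a == i)%:R.
  have rE : (m - r <= \rank Etop)%N.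
    have E1 : rowsub (@top_idx m r) Etop = 1%:M.
      by apply/matrixP => a b; rewrite !mxE (inj_eq (@top_inj m r)) eq_sym.
    by rewrite -{1}(mxrank1 F (m - r)) -E1 rank_rowsub_le.
  have Gc : colsub (@top_idx m r) G = G *m Etop.
    apply/matrixP => i a; rewrite [RHS]mxE (bigD1 (top_idx a)) //= [X in _ * X]mxE eqxx mulr1.
    rewrite big1 ?addr0; first by rewrite mxE.
    by move=> j nj; rewrite mxE eq_sym (negbTE nj) mulr0.
  have r1 : (\rank Etop <= \rank (colsub (@top_idx m r) G))%N.
    have EE : Etop = invmx G *m (G *m Etop) by rewrite mulmxA mulVmx ?mul1mx.
    by rewrite Gc {1}EE mxrankM_maxr.
  have r2 : (\rank (colsub (@top_idx m r) G) <= m - r')%N.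
    apply: leq_trans (rank_rowsub_ge (@top_inj m r') _) (rank_leq_row _).
    move=> i Hi j; have [i0 <-] := bot_of hr' (not_top Hi).
    by rewrite mxE Gz.
  have := leq_trans rE (leq_trans r1 r2).
  have h1 := hr; have h2 := hr'; move: h1 h2; clear; lia.
have chainA : forall v, (\rank (completion (blkA S r' N') v) <= \rank (completion (blkA S r N) v))%N.
  move=> v; rewrite !completion_sub cN mxsub_mul.
  apply: leq_trans (mxrankM_maxr _ _) _.
  have -> : mxsub (@top_idx m r) (@left_idx n S) (completion N v)
      = rowsub (@top_idx m r) (colsub (@left_idx n S) (completion N v)).
    by apply/matrixP => i j; rewrite !mxE.
  apply: (rank_rowsub_ge (@top_inj m r)) => i Hi j.
  by rewrite mxE Zcomp.
have rge : (r <= r')%N.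
  case: FA' => [s0 | [[v hv] _]].
    have h1 := hr; have h2 := hr'; move: Sz' h1 h2; case: z => /=; rewrite s0 addn0; lia.
  have := chainA v; rewrite hv => h; have := leq_trans h (rank_leq_row _).
  have h1 := hr; have h2 := hr'; move: h1 h2; clear; lia.
have err : r' = r by apply/eqP; rewrite eqn_leq rle rge.
subst r'.
have ehr : hr' = hr by apply: bool_irrelevance.
subst hr'.
have chainC : forall v, (\rank (completion (blkC S hr N') v) <= \rank (completion (blkC S hr N) v))%N.
  move=> v; rewrite !completion_sub cN mxsub_mul.
  set Y := completion N v.
  have -> : rowsub (bot_idx hr) G *m colsub (@right_idx n S) Y =
      colsub (bot_idx hr) (rowsub (bot_idx hr) G) *m rowsub (bot_idx hr) (colsub (@right_idx n S) Y).
    apply/matrixP => i c; rewrite !mxE.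
    rewrite (sum_inj_supp (bot_inj (hr:=hr))); first by apply: eq_bigr => l _; rewrite !mxE.
    move=> j Hj; have [a <-] := top_of (not_bot Hj).
    by rewrite !mxE Gz mul0r.
  apply: leq_trans (mxrankM_maxr _ _) _.
  have -> : mxsub (bot_idx hr) (@right_idx n S) Y
      = rowsub (bot_idx hr) (colsub (@right_idx n S) Y).
    by apply/matrixP => i j; rewrite !mxE.
  by [].
split => //.
- case: FA' => [s0 | [[v hv] _]]; [by left | right; split].
    by exists v; apply/eqP; rewrite eqn_leq rank_leq_row -{1}hv chainA.
  by move=> v'; apply: rank_leq_row.
- case: FC' => [r0 | [[v hv] _]]; [by left | right; split].
    by exists v; apply/eqP; rewrite eqn_leq rank_leq_col -{1}hv chainC.
  by move=> v'; apply: rank_leq_col.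
Qed.
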